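(* Let $W$ be an eventually periodic subset of $\mathbb{Z}^d$ with periods $u_1,\dots,u_d$, and let $\mathscr{W}_1,\mathcal{W}$ be as defined in the context. Suppose $\mathscr{W}_1\neq\emptyset$ and there exists a nonempty finite subset $\mathcal{M}\subseteq\mathbb{Z}^d$ such that: (1) $\pi$ restricted to $\mathcal{M}$ is injective; (2) $\pi(\mathcal{M}+(\mathcal{W}\cup\mathscr{W}_1))=\mathbb{Z}^d/\mathcal{L}$; (3) for every $m\in\mathcal{M}$ there exists $w\in\mathscr{W}_1$ such that $m+w\not\equiv m'+w'\pmod{\mathcal{L}}$ for all $m'\in\mathcal{M}\setminus\{m\}$ and all $w'\in\mathcal{W}\cup\mathscr{W}_1$. Then $W$ has a minimal complement in $\mathbb{Z}^d$.
   Context: $d\geqslant1$, $\mathbb{N}=\{0,1,2,\dots\}$. Let $u_1,\dots,u_d\in\mathbb{Z}^d$ satisfy no nontrivial $\mathbb{Z}$-linear relation, $\mathcal{L}=\mathbb{Z}u_1+\dots+\mathbb{Z}u_d$, $P=\mathbb{N}u_1+\dots+\mathbb{N}u_d$, $\pi:\mathbb{Z}^d\to\mathbb{Z}^d/\mathcal{L}$ the quotient map. A nonempty $X\subseteq\mathbb{Z}^d$ is eventually periodic with periods $u_1,\dots,u_d$ if $X\subseteq F+P$ for some nonempty finite $F\subseteq\mathbb{Z}^d$ and $x+P\subseteq X$ for all but finitely many $x\in X$. For such $W$: $\mathscr{W}=\{w\in W:w+P\not\subseteq W\}$; $\mathcal{W}=\{w\in W\setminus\mathscr{W}:(w-P)\cap(W\setminus\mathscr{W})=\{w\}\}$;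 $\mathscr{W}_1$ is the set of elements of $\mathscr{W}$ congruent modulo $\mathcal{L}$ to no element of $\mathcal{W}$. A nonempty $M\subseteq\mathbb{Z}^d$ is a complement of $W$ if $M+W=\mathbb{Z}^d$, and a minimal complement if no proper subset of $M$ is a complement of $W$. *)

(* Defs.v *)
(* Z^d is modelled as 'rV[int]_d; subsets of Z^d as predicates
   'rV[int]_d -> Prop; finite subsets as explicit seqs. *)
From mathcomp Require Import all_boot all_order all_algebra.
Set Implicit Arguments. Unset Strict Implicit. Unset Printing Implicit Defensive.
Import Order.TTheory GRing.Theory Num.Theory.
Local Open Scope ring_scope.

Definition vec (d : nat) := 'rV[int]_d.

Definition Zindep d (u : 'I_d -> vec d) : Prop :=
  forall c : 'I_d -> int, \sum_(i < d) u i *~ c i = 0 -> forall i, c i = 0.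

Definition inL d (u : 'I_d -> vec d) (x : vec d) : Prop :=
  exists c : 'I_d -> int, x = \sum_(i < d) u i *~ c i.

Definition inP d (u : 'I_d -> vec d) (x : vec d) : Prop :=
  exists c : 'I_d -> nat, x = \sum_(i < d) u i *+ c i.

(* x = y mod L, i.e. pi x = pi y *)
Definition congrL d (u : 'I_d -> vec d) (x y : vec d) : Prop := inL u (x - y).

Definition finite_set d (X : vec d -> Prop) : Prop :=
  exists s : seq (vec d), forall x, X x -> x \in s.

Definition eventually_periodic d (u : 'I_d -> vec d) (X : vec d -> Prop) : Prop :=
  (exists x, X x) /\
  (exists F : seq (vec d), F != [::] /\
     forall x, X x -> exists f p, f \in F /\ inP u p /\ x = f + p) /\
  finite_set (fun x => X x /\ ~ (forall p, inP u p -> X (x + p))).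

Definition scrW d (u : 'I_d -> vec d) (W : vec d -> Prop) (w : vec d) : Prop :=
  W w /\ ~ (forall p, inP u p -> W (w + p)).

Definition calW d (u : 'I_d -> vec d) (W : vec d -> Prop) (w : vec d) : Prop :=
  (W w /\ ~ scrW u W w) /\
  forall p, inP u p -> (W (w - p) /\ ~ scrW u W (w - p)) -> w - p = w.

Definition scrW1 d (u : 'I_d -> vec d) (W : vec d -> Prop) (w : vec d) : Prop :=
  scrW u W w /\ forall w', calW u W w' -> ~ congrL u w w'.

Definition is_complement d (M W : vec d -> Prop) : Prop :=
  (exists m, M m) /\ forall z, exists m w, M m /\ W w /\ z = m + w.

Definition is_minimal_complement d (M W : vec d -> Prop) : Prop :=
  is_complement M W /\
  forall M' : vec d -> Prop,
    (forall x, M' x -> M x) -> (exists x, M x /\ ~ M' x) -> ~ is_complement M' W.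

(* Main.v *)
Require Import Defs.
From mathcomp Require Import all_boot all_order all_algebra zify ring.
From Stdlib Require Import Classical ClassicalEpsilon.
Import Order.TTheory GRing.Theory Num.Theory.
Local Open Scope ring_scope.

Set Implicit Arguments. Unset Strict Implicit.
Ltac veq := apply/matrixP => ? ?; rewrite !mxE; ring.

Section Lin.
Variable d : nat.
Variable u : 'I_d -> vec d.

Definition lin (c : 'I_d -> int) : vec d := \sum_(i < d) u i *~ c i.

Lemma linD a b : lin a + lin b = lin (fun i => a i + b i).
Proof. by rewrite /lin -big_split; apply: eq_bigr => i _; rewrite mulrzDr. Qed.

Lemma linN a : - lin a = lin (fun i => - a i).
Proof. by rewrite /lin -sumrN; apply: eq_bigr => i _; rewrite mulrNz. Qed.

Lemma linB a b : lin a - lin b = lin (fun i => a i - b i).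
Proof. by rewrite linN linD. Qed.

Lemma lin0 : lin (fun _ => 0) = 0.
Proof. by rewrite /lin big1 // => i _; rewrite mulr0z. Qed.

Lemma linP (n : 'I_d -> nat) : \sum_(i < d) u i *+ n i = lin (fun i => (n i)%:Z).
Proof. by rewrite /lin; apply: eq_bigr => i _; rewrite pmulrn. Qed.

Lemma lin_delta i0 t : lin (fun i => if i == i0 then t else 0) = u i0 *~ t.
Proof.
rewrite /lin (bigD1 i0) //= eqxx big1 ?addr0 // => i /negbTE ->; by rewrite mulr0z.
Qed.

Lemma inL_lin x : inL u x -> exists c, x = lin c. Proof. by []. Qed.
Lemma lin_inL c : inL u (lin c). Proof. by exists c. Qed.

Lemma lin_ext a b : (forall i, a i = b i) -> lin a = lin b.
Proof. by move=> h; rewrite /lin; apply: eq_bigr => i _; rewrite h. Qed.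

Lemma inL0 : inL u 0. Proof. by exists (fun _ => 0); rewrite big1 // => i _; rewrite mulr0z. Qed.
Lemma inLD x y : inL u x -> inL u y -> inL u (x + y).
Proof. by move=> [a ->] [b ->]; rewrite linD; apply: lin_inL. Qed.
Lemma inLN x : inL u x -> inL u (- x).
Proof. by move=> [a ->]; rewrite linN; apply: lin_inL. Qed.
Lemma inLB x y : inL u x -> inL u y -> inL u (x - y).
Proof. by move=> hx hy; apply: inLD => //; apply: inLN. Qed.

Lemma inP_lin x : inP u x -> exists n : 'I_d -> nat, x = lin (fun i => (n i)%:Z).
Proof. by move=> [n ->]; exists n; rewrite linP. Qed.
Lemma inP_inL x : inP u x -> inL u x.
Proof. by move=> /inP_lin [n ->]; apply: lin_inL. Qed.
Lemma inP0 : inP u 0.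
Proof. exists (fun _ => 0%N); by rewrite big1 // => i _; rewrite mulr0n. Qed.
Lemma inPD x y : inP u x -> inP u y -> inP u (x + y).
Proof.
move=> [a ->] [b ->]; exists (fun i => (a i + b i)%N).
by rewrite -big_split; apply: eq_bigr => i _; rewrite mulrnDr.
Qed.

Definition inNL (N : nat) x := exists c, x = lin (fun i => c i * N%:Z).

Lemma inNL_inL N x : inNL N x -> inL u x.
Proof. by move=> [c ->]; apply: lin_inL. Qed.
Lemma inNL0 N : inNL N 0.
Proof. exists (fun _ => 0); rewrite -lin0; apply: lin_ext => i; by rewrite mul0r. Qed.
Lemma inNLD N x y : inNL N x -> inNL N y -> inNL N (x + y).
Proof.
move=> [a ->] [b ->]; exists (fun i => a i + b i); rewrite linD.
by apply: lin_ext => i; rewrite mulrDl.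
Qed.
Lemma inNLN N x : inNL N x -> inNL N (- x).
Proof.
move=> [a ->]; exists (fun i => - a i); rewrite linN.
by apply: lin_ext => i; rewrite mulNr.
Qed.
Lemma inNLB N x y : inNL N x -> inNL N y -> inNL N (x - y).
Proof. by move=> hx hy; apply: inNLD => //; apply: inNLN. Qed.

Hypothesis hu : Zindep u.

Lemma lin_inj a b : lin a = lin b -> forall i, a i = b i.
Proof.
move=> e i; have := @hu (fun i => a i - b i).
rewrite -/(lin _) -linB e subrr => /(_ erefl i) /eqP; rewrite subr_eq0 => /eqP //.
Qed.

End Lin.

Lemma seq_bound (T : eqType) (s : seq T) (Q : T -> nat -> Prop) :
  (forall x n n', Q x n -> (n <= n')%N -> Q x n') ->
  (forall x, x \in s -> exists n, Q x n) -> exists n, forall x, x \in s -> Q x n.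
Proof.
move=> mono; elim: s => [|a s IH] H; first by exists 0%N.
have [na Ha] := H a (mem_head _ _).
have [ns Hs] := IH (fun x xs => H x ltac:(by rewrite inE xs orbT)).
exists (maxn na ns) => x; rewrite inE => /orP [/eqP -> | xs].
  by apply: mono Ha _; exact: leq_maxl.
by apply: mono (Hs x xs) _; exact: leq_maxr.
Qed.

Section WS.
Variable d : nat.
Variable u : 'I_d -> vec d.
Variable W : vec d -> Prop.
Variable F : seq (vec d).
Hypothesis hF : forall x, W x -> exists f p, f \in F /\ inP u p /\ x = f + p.
Hypothesis hu : Zindep u.

Lemma up_closed a : W a -> ~ scrW u W a -> forall p, inP u p -> W (a + p).
Proof.
move=> Wa nsa p Pp; apply: NNPP => nW; apply: nsa; split => // H.
by apply: nW; apply: H.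
Qed.

Lemma sum_pos (n : 'I_d -> nat) : lin u (fun i => (n i)%:Z) <> 0 -> (0 < \sum_i n i)%N.
Proof.
move=> nz; case: (posnP (\sum_i n i)) => // /eqP; rewrite sum_nat_eq0 => /forallP H.
exfalso; apply: nz; rewrite -(lin0 u); apply: lin_ext => i.
by have /eqP -> := H i.
Qed.

Lemma step x : W x -> ~ scrW u W x -> ~ calW u W x ->
  exists p (pc : 'I_d -> nat), p = lin u (fun i => (pc i)%:Z) /\ (0 < \sum_i pc i)%N /\
    W (x - p) /\ ~ scrW u W (x - p).
Proof.
move=> Wx nsx cx.
have [p [Pp [[Wp nsp] np]]] : exists p, inP u p /\ (W (x - p) /\ ~ scrW u W (x - p)) /\ x - p <> x.
  by apply: NNPP => H; apply: cx; split => // p Pp Hp; apply: NNPP => ne; apply: H; exists p.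
have [pc ep] := inP_lin Pp; exists p, pc; split => //; split => //.
by apply: sum_pos; rewrite -ep => p0; apply: np; rewrite p0 subr0.
Qed.

Lemma descent_aux n x : W x -> ~ scrW u W x ->
  (forall f (pc : 'I_d -> nat), f \in F -> x = f + lin u (fun i => (pc i)%:Z) -> (\sum_i pc i <= n)%N) ->
  exists a, calW u W a /\ inP u (x - a).
Proof.
elim: n x => [|n IH] x Wx nsx Hb; (case: (classic (calW u W x)) => cx;
  [exists x; split => //; rewrite subrr; exact: inP0|]);
  have [p [pc [ep [hpos [Wp nsp]]]]] := step Wx nsx cx.
- have [f [q [fF [Pq eq]]]] := hF Wp; have [qc eq'] := inP_lin Pq.
  have hx : x = f + lin u (fun i => ((qc i + pc i)%N)%:Z).
    rewrite (@lin_ext _ u _ (fun i => (qc i)%:Z + (pc i)%:Z)) // -(linD u) -eq' -ep.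
    rewrite addrA -eq; veq.
  by have := Hb _ _ fF hx; rewrite big_split /= => h; have := leq_trans hpos (leq_trans (leq_addl _ _) h).
have [a [ca Pa]] : exists a, calW u W a /\ inP u (x - p - a).
  apply: IH => // f' pc' f'F e'.
  have hx : x = f' + lin u (fun i => ((pc' i + pc i)%N)%:Z).
    rewrite (@lin_ext _ u _ (fun i => (pc' i)%:Z + (pc i)%:Z)) // -(linD u) addrA -e' -ep; veq.
  have := Hb _ _ f'F hx; rewrite big_split /= => h; rewrite -ltnS; apply: leq_trans h.
  by rewrite -addn1 leq_add2l.
exists a; split => //.
have -> : x - a = (x - p - a) + p by veq.
apply: inPD => //; rewrite ep -linP; by exists pc.
Qed.

Lemma descent w : W w -> ~ scrW u W w -> exists a, calW u W a /\ inP u (w - a).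
Proof.
move=> Ww nsw.
have [n Hn] : exists n, forall f, f \in F -> forall (pc : 'I_d -> nat),
    w = f + lin u (fun i => (pc i)%:Z) -> (\sum_i pc i <= n)%N.
  apply: (seq_bound (Q := fun f n => forall pc : 'I_d -> nat,
    w = f + lin u (fun i => (pc i)%:Z) -> (\sum_i pc i <= n)%N)).
    by move=> f n n' H le pc e; apply: leq_trans (H pc e) le.
  move=> f _; case: (classic (exists pc : 'I_d -> nat, w = f + lin u (fun i => (pc i)%:Z))).
    move=> [pc e]; exists (\sum_i pc i)%N => pc' e'.
    have ee : lin u (fun i => (pc i)%:Z) = lin u (fun i => (pc' i)%:Z).
      by apply: (addrI f); rewrite -e -e'.
    rewrite (eq_bigr (fun i => pc i)) // => i _.
    by have /eqP := lin_inj hu ee i; rewrite eqz_nat => /eqP.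
  by move=> H; exists 0%N => pc e; exfalso; apply: H; exists pc.
exact: (descent_aux Ww nsw (fun f pc fF e => Hn f fF pc e)).
Qed.

Lemma W_rep w : W w -> exists w', (calW u W w' \/ scrW1 u W w') /\ congrL u w w'.
Proof.
move=> Ww; case: (classic (scrW u W w)) => sw.
  case: (classic (exists a, calW u W a /\ congrL u w a)) => [[a [ca ea]]|H].
    by exists a; split => //; left.
  exists w; split; last by rewrite /congrL subrr; apply: inL0.
  by right; split => // w' cw' e; apply: H; exists w'.
have [a [ca Pa]] := descent Ww sw; exists a; split; first by left.
exact: inP_inL.
Qed.

Lemma scr_of_congr w1 w : scrW1 u W w1 -> W w -> inL u (w - w1) -> scrW u W w.
Proof.
move=> [s1 n1] Ww e; apply: NNPP => nsw.
have [a [ca Pa]] := descent Ww nsw.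
apply: (n1 a ca); rewrite /congrL.
have -> : w1 - a = - (w - w1) + (w - a) by veq.
by apply: inLD; [apply: inLN | apply: inP_inL].
Qed.

End WS.

Section Main.
Variable d : nat.
Variable u : 'I_d -> vec d.
Variable W : vec d -> Prop.
Hypothesis hu : Zindep u.
Hypothesis hd : (0 < d)%N.
Variable F : seq (vec d).
Hypothesis hF : forall x, W x -> exists f p, f \in F /\ inP u p /\ x = f + p.
Variable s0 : seq (vec d).
Hypothesis hs0 : forall x, scrW u W x -> x \in s0.
Variable s : seq (vec d).
Hypothesis us : uniq s.
Variable N : nat.
Hypothesis hN : (size s0 < N)%N.
Hypothesis hNb : forall a b, a \in s0 -> b \in s0 -> inL u (a - b) ->
  exists c, a - b = lin u c /\ forall i, (absz (c i) < N)%N.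
Hypothesis h2s : forall z, exists m w, m \in s /\ (calW u W w \/ scrW1 u W w) /\
          congrL u z (m + w).
Hypothesis h3s : forall m, m \in s -> exists w, scrW1 u W w /\
          forall m' w', m' \in s -> m' != m -> (calW u W w' \/ scrW1 u W w') ->
            ~ congrL u (m + w) (m' + w').

Definition J := ('I_(size s) * {ffun 'I_d -> 'I_N})%type.
Definition r (j : J) := nth 0 s j.1 + lin u (fun i => ((j.2 i : nat))%:Z).
Definition MB (B : {set J}) x := exists j, j \in B /\ inNL u N (x - r j).
Definition comp B := forall z, exists x w, MB B x /\ W w /\ z = x + w.

Lemma W_of w : calW u W w \/ scrW1 u W w -> W w.
Proof. by case=> [[[]]|[[]]]. Qed.

Lemma N0 : (0 < N)%N. Proof. by apply: leq_ltn_trans hN. Qed.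

Lemma modN_lt (c : int) : (absz (c %% N%:Z)%Z < N)%N.
Proof.
have h1 := ltz_pmod c (ltac:(rewrite ltz_nat; exact: N0) : (0 < N%:Z)).
have h2 := modz_ge0 c (ltac:(rewrite eqz_nat -lt0n; exact: N0) : N%:Z != 0).
lia.
Qed.

Lemma comp_setT : comp setT.
Proof.
move=> z; have [m [w [ms [cw [c ec]]]]] := h2s z.
pose k : {ffun 'I_d -> 'I_N} := [ffun i => Ordinal (modN_lt (c i))].
pose j : J := (Ordinal (ltac:(rewrite index_mem; exact: ms) : (index m s < size s)%N), k).
exists (z - w), w; split; last by split; [exact: W_of | rewrite subrK].
exists j; split; first by rewrite inE.
rewrite /r /= nth_index //.
have -> : z - w - (m + lin u (fun i => (k i : nat)%:Z)) = (z - (m + w)) - lin u (fun i => (k i : nat)%:Z) by veq.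
rewrite ec linB; exists (fun i => (c i %/ N%:Z)%Z); apply: lin_ext => i.
rewrite /k ffunE /= gez0_abs; last by apply: modz_ge0; rewrite eqz_nat -lt0n N0.
by rewrite {1}(divz_eq (c i) N%:Z) addrK.
Qed.

Lemma exists_min : exists B : {set J}, comp B /\ forall j, j \in B -> ~ comp (B :\ j).
Proof.
suff H : forall n (A : {set J}), (#|A| <= n)%N -> comp A ->
  exists B : {set J}, comp B /\ forall j, j \in B -> ~ comp (B :\ j).
  by apply: (H #|[set: J]|) => //; exact: comp_setT.
elim=> [|n IH] A hA cA; (case: (classic (exists j, j \in A /\ comp (A :\ j))) =>
  [[j [jA cj]] | HH]; last by exists A; split => // j jA cj; apply: HH; exists j).
  by move: hA; rewrite (cardsD1 j) jA.
apply: (IH (A :\ j)) => //; move: hA; by rewrite (cardsD1 j) jA add1n ltnS.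
Qed.

Lemma NL_single i0 (t : int) : inNL u N (u i0 *~ t) -> (absz t < N)%N -> t = 0.
Proof.
move=> [c e] lt; rewrite -lin_delta in e; have := lin_inj hu e i0; rewrite eqxx => et.
rewrite et in lt *; have : c i0 = 0 by nia.
by move=> ->; rewrite mul0r.
Qed.

Lemma sep a b : a \in s0 -> b \in s0 -> inNL u N (a - b) -> a = b.
Proof.
move=> ha hb hab; have [c [ec hc]] := hNb ha hb (inNL_inL hab).
move: hab => [c' e']; rewrite ec in e'.
have hz : forall i, c i = 0.
  move=> i; have ei := lin_inj hu e' i; have lt := hc i; rewrite ei in lt.
  have : c' i = 0 by nia.
  by move=> h0; rewrite ei h0 mul0r.
by apply: subr0_eq; rewrite ec -(lin0 u); apply: lin_ext.
Qed.


Lemma uk_inL i0 (k : nat) : inL u (u i0 *+ k).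
Proof. by rewrite pmulrn -lin_delta; apply: lin_inL. Qed.

Lemma two_in_class B j : comp B -> j \in B -> exists j', j' \in B /\ j' != j /\ j'.1 = j.1.
Proof.
move=> cB jB; apply: NNPP => H.
have H' : forall j', j' \in B -> j'.1 = j.1 -> j' = j.
  move=> j' j'B e; apply/eqP; apply: NNPP => ne; apply: H; exists j'; split => //; split => //.
  by apply/negP.
set m := nth 0 s j.1.
have ms : m \in s by apply: mem_nth.
have [wm [swm Hm]] := h3s ms.
pose i0 : 'I_d := Ordinal hd.
have Hk : forall k : 'I_N, exists w, w \in s0 /\ inNL u N (w - wm - u i0 *+ k).
  move=> k; have [x [w [[j' [j'B xj']] [Ww e]]]] := cB (r j + wm + u i0 *+ k).
  have [w'' [cw'' ew'']] := W_rep hF hu Ww.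
  have ex : x = r j + wm + u i0 *+ k - w by rewrite e addrK.
  have ej : j'.1 = j.1.
    apply: NNPP => ne.
    have mne : nth 0 s j'.1 != m.
      rewrite /m nth_uniq //; apply/negP => /eqP e1; apply: ne; exact: val_inj.
    apply: (Hm _ w'' (mem_nth _ (ltn_ord j'.1)) mne cw'').
    have EE : m + wm - (nth 0 s j'.1 + w'') =
      - lin u (fun i => ((j.2 i : nat))%:Z) - u i0 *+ k + (x - r j') + lin u (fun i => ((j'.2 i : nat))%:Z) + (w - w'').
      by rewrite ex /r /m; veq.
    rewrite /congrL EE.
    apply: inLD => //; apply: inLD; last exact: lin_inL.
    apply: inLD; last exact: inNL_inL xj'.
    by apply: inLB; [apply: inLN; apply: lin_inL | apply: uk_inL].
  have ejj := H' j' j'B ej; subst j'.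
  have hw : w - wm = u i0 *+ k - (x - r j) by rewrite ex; veq.
  exists w; split.
    apply: hs0; apply: (scr_of_congr hF hu swm Ww); rewrite hw.
    by apply: inLB; [apply: uk_inL | apply: inNL_inL xj'].
  have -> : w - wm - u i0 *+ k = - (x - r j) by rewrite ex; veq.
  by apply: inNLN.
pose f := fun k => proj1_sig (constructive_indefinite_description _ (Hk k)).
have fP : forall k, f k \in s0 /\ inNL u N (f k - wm - u i0 *+ k).
  by move=> k; rewrite /f; case: constructive_indefinite_description.
have finj : injective f.
  move=> k k' e; have h := inNLB (fP k).2 (fP k').2.
  rewrite e in h.
  have e2 : f k' - wm - u i0 *+ k - (f k' - wm - u i0 *+ k') = u i0 *~ (k'%:Z - k%:Z).
    by rewrite mulrzBr !pmulrn; veq.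
  rewrite e2 in h; have := NL_single h.
  have hk := ltn_ord k; have hk' := ltn_ord k'.
  move=> /(_ ltac:(lia)) h0; apply: val_inj => /=; lia.
have U : uniq (map f (enum 'I_N)) by rewrite map_inj_uniq // enum_uniq.
have := uniq_leq_size U (s2 := s0).
rewrite size_map size_enum_ord => /(_ _) h.
suff : (N <= size s0)%N by rewrite leqNgt hN.
by apply: h => y /mapP [k _ ->]; exact: (fP k).1.
Qed.

Lemma main_min : exists M, is_minimal_complement M W.
Proof.
have [B [cB minB]] := exists_min.
exists (MB B); split.
  split; last exact: cB.
  by have [x [w [Mx _]]] := cB 0; exists x.
move=> M' sub [x [Mx nM'x]] [_ cM'].
have [j [jB xj]] := Mx.
have [z0 Hz0] : exists z0, forall x' w', MB (B :\ j) x' -> W w' -> z0 <> x' + w'.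
  apply: NNPP => H; apply: (minB j jB) => z; apply: NNPP => H2; apply: H.
  by exists z => x' w' M'x W'w e; apply: H2; exists x', w'.
have [x0 [w0 [[j0 [j0B x0j0]] [Ww0 e0]]]] := cB z0.
have ej0 : j0 = j.
  apply: NNPP => ne; apply: (Hz0 x0 w0) => //; exists j0; split => //.
  rewrite in_setD1 j0B andbT; apply/negP => /eqP; exact: ne.
subst j0.
case: (classic (exists a, W a /\ ~ scrW u W a /\ inL u (w0 - a))) => [[a [Wa [nsa ea]]] | HB].
- have [j'' [j''B [ne e1]]] := two_in_class cB jB.
  have hv : inL u (z0 - r j'' - a).
    have -> : z0 - r j'' - a = (x0 - r j) + (lin u (fun i => ((j.2 i : nat))%:Z)
        - lin u (fun i => ((j''.2 i : nat))%:Z)) + (w0 - a) by rewrite e0 /r e1; veq.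
    apply: inLD => //; apply: inLD; first exact: inNL_inL x0j0.
    by apply: inLB; apply: lin_inL.
  have [c ec] := hv; change (z0 - r j'' - a = lin u c) in ec.
  pose K := (\sum_i absz (c i))%N.
  have hK : forall i, (absz (c i) <= K)%N by move=> i; rewrite /K (bigD1 i) //= leq_addr.
  have hN0 := N0.
  apply: (Hz0 (r j'' + lin u (fun _ => - (K%:Z * N%:Z))) (a + lin u (fun i => c i + K%:Z * N%:Z))).
  + exists j''; split; first by rewrite in_setD1 ne j''B.
    exists (fun _ => - K%:Z); rewrite addrC addKr; apply: lin_ext => i; by rewrite mulNr.
  + apply: (up_closed Wa nsa); exists (fun i => absz (c i + K%:Z * N%:Z)); rewrite linP.
    apply: lin_ext => i; rewrite gez0_abs //; have := hK i; nia.
  + have -> : z0 = (z0 - r j'' - a) + r j'' + a by veq.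
    have HL : lin u (fun _ => - (K%:Z * N%:Z)) + lin u (fun i => c i + K%:Z * N%:Z) = lin u c.
      by rewrite linD; apply: lin_ext => i; ring.
    rewrite ec -HL; veq.
- have sw0 : forall w', W w' -> inL u (w' - w0) -> w' \in s0.
    move=> w' Ww' e; apply: hs0; apply: NNPP => ns; apply: HB; exists w'; split => //; split => //.
    by rewrite -opprB; apply: inLN.
  have Hw0 : w0 \in s0 by apply: sw0 => //; rewrite subrr; apply: inL0.
  have [x' [w' [M'x' [Ww' e']]]] := cM' (x + w0).
  have [j' [j'B x'j']] := sub _ M'x'.
  have ej' : j' = j.
    apply: NNPP => ne; apply: (Hz0 (x' + (x0 - x)) w').
    + exists j'; split; first by rewrite in_setD1 j'B andbT; apply/negP => /eqP.
      have -> : x' + (x0 - x) - r j' = (x' - r j') + (x0 - r j) - (x - r j) by veq.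
      by apply: inNLB => //; apply: inNLD.
    + done.
    + rewrite e0; have -> : x' + (x0 - x) + w' = (x' + w') + x0 - x by veq.
      rewrite -e'; veq.
  subst j'.
  have hNL : inNL u N (w' - w0).
    have -> : w' - w0 = (x - r j) - (x' - r j) + ((x' + w') - (x + w0)) by veq.
    by rewrite e' subrr addr0; apply: inNLB.
  have hw : w' = w0 by apply: sep (sw0 _ Ww' (inNL_inL hNL)) Hw0 hNL.
  apply: nM'x; have -> : x = x' by apply: (addIr w0); rewrite e' hw.
  exact: M'x'.
Qed.

End Main.

Unset Implicit Arguments.

Theorem theorem4p12 (d : nat) (u : 'I_d -> vec d) (W : vec d -> Prop)
  (hd : (1 <= d)%N) (hu : Zindep u) (hW : eventually_periodic u W)
  (hW1 : exists w, scrW1 u W w)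
  (Ms : seq (vec d)) (hMne : Ms != [::])
  (h1 : forall m m', m \in Ms -> m' \in Ms -> congrL u m m' -> m = m')
  (h2 : forall z, exists m w, m \in Ms /\ (calW u W w \/ scrW1 u W w) /\
          congrL u z (m + w))
  (h3 : forall m, m \in Ms -> exists w, scrW1 u W w /\
          forall m' w', m' \in Ms -> m' != m -> (calW u W w' \/ scrW1 u W w') ->
            ~ congrL u (m + w) (m' + w')) :
  exists M : vec d -> Prop, is_minimal_complement M W.
Proof.
have [_ [[F [_ hF]] [s0 hs0]]] := hW.
have [N0 HN0] : exists n, forall a, a \in s0 -> forall b, b \in s0 -> inL u (a - b) ->
    exists c, a - b = lin u c /\ forall i, (absz (c i) < n)%N.
  apply: (seq_bound (Q := fun a n => forall b, b \in s0 -> inL u (a - b) ->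
    exists c, a - b = lin u c /\ forall i, (absz (c i) < n)%N)).
    move=> a n n' H le b bs e; have [c [ec hc]] := H b bs e.
    by exists c; split => // i; apply: leq_trans (hc i) le.
  move=> a _.
  apply: (seq_bound (Q := fun b n => inL u (a - b) ->
    exists c, a - b = lin u c /\ forall i, (absz (c i) < n)%N)).
    move=> b n n' H le e; have [c [ec hc]] := H e.
    by exists c; split => // i; apply: leq_trans (hc i) le.
  move=> b _; case: (classic (inL u (a - b))) => [[c ec]|ne].
    exists (\sum_i absz (c i)).+1 => _; exists c; split => // i.
    by rewrite ltnS (bigD1 i) //= leq_addr.
  by exists 0%N => e.
pose N := maxn N0 (size s0).+1.
have hN : (size s0 < N)%N by rewrite /N leq_max leqnn orbT.
have hNb : forall a b, a \in s0 -> b \in s0 -> inL u (a - b) ->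
    exists c, a - b = lin u c /\ forall i, (absz (c i) < N)%N.
  move=> a b ha hb e; have [c [ec hc]] := HN0 a ha b hb e.
  by exists c; split => // i; apply: leq_trans (hc i) _; rewrite /N leq_max leqnn.
apply: (main_min hu hd hF (s0 := s0) hs0 (undup_uniq Ms) hN hNb).
  move=> z; have [m [w [ms H]]] := h2 z; exists m, w; by rewrite mem_undup.
move=> m; rewrite mem_undup => ms; have [w [sw H]] := h3 m ms.
exists w; split => // m' w' m's; rewrite mem_undup in m's; exact: H.
Qed.
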